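(* Let $1\le r\le n$, let $\mathcal{A}$ be a family of $r$-element subsets of $[n]$, and let $m$ be defined on $\mathcal{A}$ by: $m(A)=n/r$ if $A$ is contained in some matching of $\lfloor n/r\rfloor$ sets from $\mathcal{A}$, and otherwise $m(A)$ is the size of the largest matching of sets from $\mathcal{A}$ containing $A$. Let $\sigma$ be a cyclic permutation of $[n]$ and let $\mathcal{A}^\sigma$ be the collection of sets in $\mathcal{A}$ that are intervals in $\sigma$. Then \[ \sum_{A\in\mathcal{A}^\sigma}\frac{1}{m(A)}\le r. \]
   Context: A matching is a collection of pairwise disjoint sets. A cyclic permutation $\sigma$ of $[n]$ is a cyclic ordering $a_1<a_2<\dots<a_n<a_1$ of the elements of $[n]$. A set is an interval in $\sigma$ if its elements are consecutive in this cyclic order. *)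

(* Defs.v *)
From mathcomp Require Import all_boot all_order all_algebra all_fingroup.
Set Implicit Arguments. Unset Strict Implicit. Unset Printing Implicit Defensive.
Import Order.TTheory GRing.Theory Num.Theory.

Definition matching_of (n : nat) (F M : {set {set 'I_n}}) : bool :=
  (M \subset F) && trivIset M.

Definition mval (n r : nat) (F : {set {set 'I_n}}) (A : {set 'I_n}) : rat :=
  if [exists M : {set {set 'I_n}}, [&& matching_of F M, A \in M & #|M| == n %/ r]]
  then (n%:R / r%:R)%R
  else (\max_(M : {set {set 'I_n}} | matching_of F M && (A \in M)) #|M|)%:R%R.

(* A cyclic permutation sigma of [n] is given by a bijection p : 'I_n -> 'I_n
   listing the cyclic order p 0 < p 1 < ... < p (n-1) < p 0.
   S is an interval of sigma iff its elements are consecutive: there is a start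
   position i and a length k <= n (k : 'I_n.+1) such that S is the set of elements whose
   position lies in i, i+1, ..., i+k-1 (mod n). *)
Definition is_interval (n : nat) (p : {perm 'I_n}) (S : {set 'I_n}) : bool :=
  [exists i : 'I_n, exists k : 'I_n.+1,
    S == [set x | (((p^-1)%g x : nat) + n - i) %% n < k]].

(* Main.v *)
Require Import Defs.
From mathcomp Require Import all_boot all_order all_algebra all_fingroup.
From mathcomp Require Import zify ring lra.
Import Order.TTheory GRing.Theory Num.Theory.
Set Implicit Arguments. Unset Strict Implicit. Unset Printing Implicit Defensive.

Definition dis (n r a b : nat) : bool :=
  ((a + r <= b) && (b + r <= a + n)) || ((b + r <= a) && (a + r <= b + n)).

Definition hh (n r k : nat) : rat :=
  if k == n %/ r then (r%:R / n%:R)%R else (k%:R)^-1%R.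

Lemma dis_sym n r a b : dis n r a b = dis n r b a.
Proof. by rewrite /dis orbC. Qed.

Lemma dis_neq n r a b : 0 < r -> dis n r a b -> a != b.
Proof. move=> r0 /orP[/andP[H1 H2]|/andP[H1 H2]]; apply/eqP; lia. Qed.

Lemma sum_le_const (T : seq nat) (w : nat -> rat) (c : rat) :
  (forall a, a \in T -> w a <= c)%R -> (\sum_(a <- T) w a <= (size T)%:R * c)%R.
Proof.
elim: T => [|x T IH] H; first by rewrite big_nil mul0r.
rewrite big_cons /= -addn1 natrD mulrDl mul1r [X in (_ <= X)%R]addrC.
apply: lerD; first by apply: H; rewrite inE eqxx.
by apply: IH => a Ha; apply: H; rewrite inE Ha orbT.
Qed.

Lemma khh n r k : 0 < r -> 0 < n -> (k%:R * hh n r k <= 1)%R.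
Proof.
move=> r0 n0; rewrite /hh; case: eqP => [->|_].
  rewrite mulrA -natrM ler_pdivrMr ?ltr0n // mul1r ler_nat; exact: leq_divM.
case: k => [|k]; first by rewrite mul0r.
by rewrite divff // pnatr_eq0.
Qed.

Lemma modn_lt2 x N : x < N + N -> x %% N = if x < N then x else x - N.
Proof.
move=> H; case: ifP => H1; first by rewrite modn_small.
have -> : x = (x - N) + N by lia.
by rewrite modnDr modn_small; lia.
Qed.

Lemma dis_track N r x y : 0 < r -> r %| N -> x < N -> y < N -> x %% r = y %% r -> x != y -> dis N r x y.
Proof.
move=> r0 /dvdnP[c ->] xN yN Hm Hne.
rewrite (divn_eq x r) (divn_eq y r) Hm in xN yN Hne *.
move: (x %/ r) (y %/ r) (y %% r) (ltn_pmod y r0) xN yN Hne => q1 q2 j jr h1 h2 h3.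
have Hq : q1 != q2 by apply: contra h3 => /eqP ->.
rewrite /dis; case: (ltngtP q1 q2) Hq => // Hlt _.
- have A1 : q2 < c by rewrite -(ltn_pmul2r r0); lia.
  have A2 : q1.+1 * r <= q2 * r by rewrite leq_mul2r Hlt orbT.
  have A3 : q2.+1 * r <= c * r by rewrite leq_mul2r A1 orbT.
  rewrite !mulSn in A2 A3.
  apply/orP; left; apply/andP; split; lia.
- have A1 : q1 < c by rewrite -(ltn_pmul2r r0); lia.
  have A2 : q2.+1 * r <= q1 * r by rewrite leq_mul2r Hlt orbT.
  have A3 : q1.+1 * r <= c * r by rewrite leq_mul2r A1 orbT.
  rewrite !mulSn in A2 A3.
  apply/orP; right; apply/andP; split; lia.
Qed.

Lemma dis_rot N r a i j : 0 < r -> a < N -> i < j -> j < N %/ r ->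
  dis N r ((a + i * r) %% N) ((a + j * r) %% N).
Proof.
move=> r0 aN ij js.
have A2 : i.+1 * r <= j * r by rewrite leq_mul2r ij orbT.
have A3 : j.+1 * r <= N %/ r * r by rewrite leq_mul2r js orbT.
have A4 := leq_divM N r.
rewrite !mulSn in A2 A3.
rewrite (@modn_lt2 (a + i * r)); last lia.
rewrite (@modn_lt2 (a + j * r)); last lia.
rewrite /dis; case: ifP => H1; case: ifP => H2; lia.
Qed.

Definition psi (p y : nat) := if y < p then y else y.+1.
Definition phi (p x : nat) := if x < p then x else x.-1.

Lemma dis_psi n r p y z : y < n -> z < n -> dis n r y z -> dis n.+1 r (psi p y) (psi p z).
Proof.
rewrite /dis /psi => yn zn; case: ifP => H1; case: ifP => H2; lia.
Qed.

Lemma psi_phi p x : x != p -> psi p (phi p x) = x.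
Proof. move=> /eqP H; rewrite /phi; case: (ltnP x p) => H1; rewrite /psi; case: ifP => H2; lia. Qed.

Lemma hh_mono n r k : 0 < r -> r <= n -> ~~ (r %| n.+1) -> (hh n.+1 r k <= hh n r k)%R.
Proof.
move=> r0 rn nd; rewrite /hh divnS // (negbTE nd) add0n.
case: eqP => // _.
rewrite ler_wpM2l // lef_pV2 ?posrE ?ltr0n ?ler_nat //; lia.
Qed.

Definition matchok n r (S M : seq nat) :=
  [/\ uniq M, {subset M <= S} & {in M &, forall x y, x != y -> dis n r x y}].

Lemma core n r (S : seq nat) (w : nat -> rat) :
  0 < r -> r <= n -> uniq S -> all (fun a => a < n) S ->
  (forall a M, a \in S -> a \in M -> matchok n r S M -> (w a <= hh n r (size M))%R) ->
  (\sum_(a <- S) w a <= r%:R)%R.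
Proof.
move=> r0; elim: n S w => [|n IH] S w rn uS aS H; first lia.
have n0 : 0 < n.+1 by [].
case: (boolP (r %| n.+1)) => dv.
-
  have E : (\sum_(a <- S) w a = \sum_(a <- S) \sum_(j < r) (if (a %% r)%N == j then w a else 0))%R.
    apply: eq_bigr => a _; rewrite -big_mkcond /= (big_pred1 (Ordinal (ltn_pmod a r0))) //.
  rewrite E.
  rewrite exchange_big /=.
  apply: (@le_trans _ _ (\sum_(j < r) 1)%R); last by rewrite sumr_const card_ord.
  apply: ler_sum => j _.
  rewrite -big_mkcond /= -big_filter.
  set T := [seq a <- S | a %% r == j].
  apply: le_trans (khh (size T) r0 n0).
  apply: sum_le_const => a Ha; apply: H => //.
  + by move: Ha; rewrite mem_filter => /andP[].
  + split; first exact: filter_uniq.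
    * by move=> x; rewrite mem_filter => /andP[].
    * move=> x y; rewrite !mem_filter => /andP[/eqP xj xS] /andP[/eqP yj yS] xy.
      apply: dis_track => //; first by move/allP: aS => /(_ x xS).
      by move/allP: aS => /(_ y yS).
      by rewrite xj yj.
- case: (boolP (all (fun x => x \in S) (iota 0 n.+1))) => full.
  +
    have sz : size S = n.+1.
      apply/eqP; rewrite eqn_leq; apply/andP; split.
        rewrite -(size_iota 0 n.+1); apply: uniq_leq_size => // x xS.
        by rewrite mem_iota add0n; move/allP: aS => /(_ x xS).
      rewrite -{1}(size_iota 0 n.+1); apply: uniq_leq_size; first exact: iota_uniq.
      by move=> x xi; move/allP: full => /(_ x xi).
    have Hw : forall a, a \in S -> (w a <= r%:R / n.+1%:R)%R.
      move=> a aSa.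
      have an : a < n.+1 by move/allP: aS => /(_ a aSa).
      set M := [seq (a + i * r) %% n.+1 | i <- iota 0 (n.+1 %/ r)].
      have -> : (r%:R / n.+1%:R)%R = hh n.+1 r (size M) by rewrite /hh size_map size_iota eqxx.
      have inj : {in iota 0 (n.+1 %/ r) &, forall i j, i != j ->
                    dis n.+1 r ((a + i * r) %% n.+1) ((a + j * r) %% n.+1)}.
        move=> i j; rewrite !mem_iota !add0n => ti tj; case: (ltngtP i j) => // ij _.
          exact: dis_rot.
        rewrite dis_sym; exact: dis_rot.
      apply: H => //.
        apply/mapP; exists 0; last by rewrite mul0n addn0 modn_small.
        by rewrite mem_iota add0n divn_gt0.
      split.
      * rewrite map_inj_in_uniq ?iota_uniq // => i j ti tj e.
        apply/eqP; apply: contraT => ne.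
        by move: (dis_neq r0 (inj i j ti tj ne)); rewrite e eqxx.
      * move=> x /mapP[i _ ->]; apply: (allP full); rewrite mem_iota add0n ltn_pmod //.
      * move=> x y /mapP[i ti ->] /mapP[j tj ->] ne; apply: inj => //.
        by apply: contra ne => /eqP ->.
    apply: le_trans (sum_le_const Hw) _.
    by rewrite sz mulrCA divff ?mulr1 // pnatr_eq0.
  + (* remove a point *)
    have [p pn pS] : exists2 p, p < n.+1 & p \notin S.
      move/allPn: full => [p]; rewrite mem_iota add0n => pn pS; by exists p.
    have rn' : r <= n.
      rewrite leq_eqVlt in rn; case/orP: rn => [/eqP e|]; last by [].
      by move: dv; rewrite -e dvdnn.
    have Hne : forall a, a \in S -> a != p by move=> a aS'; apply: contraNneq pS => <-.
    have -> : (\sum_(a <- S) w a = \sum_(a <- map (phi p) S) w (psi p a))%R.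
      rewrite big_map; apply: eq_big_seq => a aS'; by rewrite psi_phi // Hne.
    apply: IH => //.
    * rewrite map_inj_in_uniq // => x y xS yS e.
      by rewrite -(psi_phi (Hne x xS)) e psi_phi // Hne.
    * apply/allP => y /mapP[x xS ->].
      have := Hne x xS; move/allP: aS => /(_ x xS); rewrite /phi; case: ifP => ? ? ?; lia.
    * move=> a' M a'S a'M [uM sM dM].
      case/mapP: a'S => a aS' ea.
      have -> : size M = size (map (psi p) M) by rewrite size_map.
      apply: le_trans (hh_mono _ r0 rn' dv).
      have psiinj : injective (psi p).
        move=> x y; rewrite /psi; case: ifP => ?; case: ifP => ?; lia.
      have allM : forall y, y \in M -> y < n.
        move=> y /sM /mapP[x xS ->].
        have := Hne x xS; move/allP: aS => /(_ x xS); rewrite /phi; case: ifP => ? ? ?; lia.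
      apply: H => //.
        by rewrite ea psi_phi ?Hne.
      rewrite map_f //.
      split.
      -- by rewrite map_inj_uniq.
      -- move=> x /mapP[y /sM /mapP[z zS ->] ->]; by rewrite psi_phi // Hne.
      -- move=> x y /mapP[x' x'M ->] /mapP[y' y'M ->] ne.
         apply: dis_psi; try exact: allM.
         apply: dM => //; by apply: contra ne => /eqP ->.
Qed.

Definition arcset n (p : {perm 'I_n}) (k i : nat) : {set 'I_n} :=
  [set x | (((p^-1)%g x : nat) + n - i) %% n < k].

Lemma card_lt_ord n k : k <= n -> #|[set z : 'I_n | z < k]| = k.
Proof.
move=> kn.
have -> : [set z : 'I_n | z < k] = (widen_ord kn) @: [set: 'I_k].
  apply/setP => z; rewrite inE; apply/idP/imsetP.
    by move=> zk; exists (Ordinal zk); rewrite ?inE //; apply: val_inj.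
  by case=> y _ ->; rewrite /= ltn_ord.
rewrite card_imset ?cardsT ?card_ord // => a b /(congr1 val) /= e; exact: val_inj.
Qed.

Lemma card_arc n (p : {perm 'I_n}) k i : i < n -> k <= n -> #|arcset p k i| = k.
Proof.
move=> i_n kn.
have n0 : 0 < n by lia.
pose f (x : 'I_n) : 'I_n := Ordinal (ltn_pmod (((p^-1)%g x : nat) + n - i) n0).
have -> : arcset p k i = f @^-1: [set z : 'I_n | z < k].
  by apply/setP => x; rewrite !inE.
rewrite card_preimset ?card_lt_ord // => x y /(congr1 val) /=.
have hx := ltn_ord ((p^-1)%g x); have hy := ltn_ord ((p^-1)%g y).
rewrite (@modn_lt2 (_ + n - i)); last lia.
rewrite (@modn_lt2 (_ + n - i)); last lia.
move=> e.
have e' : ((p^-1)%g x : nat) = (p^-1)%g y by move: e; case: ifP; case: ifP; lia.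
by move/val_inj: e' => /perm_inj.
Qed.

Lemma dis_disj n (p : {perm 'I_n}) r j j' : j < n -> j' < n -> dis n r j j' ->
  [disjoint arcset p r j & arcset p r j'].
Proof.
move=> jn jn' d; apply/pred0P => x /=; rewrite !inE.
have hx := ltn_ord ((p^-1)%g x).
rewrite (@modn_lt2 (_ + n - j)); last lia.
rewrite (@modn_lt2 (_ + n - j')); last lia.
move: d; rewrite /dis; case: ifP; case: ifP; lia.
Qed.

Lemma arc_self n (p : {perm 'I_n}) r j (jn : j < n) : 0 < r -> p (Ordinal jn) \in arcset p r j.
Proof. by move=> r0; rewrite inE permK /= addKn modnn. Qed.

Definition st n (p : {perm 'I_n}) (A : {set 'I_n}) : nat :=
  if [pick i : 'I_n | [exists k : 'I_n.+1, A == arcset p k i]] is Some i then val i else 0.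

Lemma st_spec n (p : {perm 'I_n}) r (A : {set 'I_n}) :
  is_interval p A -> #|A| = r -> st p A < n /\ A = arcset p r (st p A).
Proof.
move=> /existsP[i /existsP[k /eqP Ak]] cA.
rewrite /st; case: pickP => [j /existsP[k' /eqP Ak']|/(_ i)]; last first.
  by rewrite Ak; move/existsP; case; exists k.
split; first exact: ltn_ord.
have : #|A| = k' by rewrite Ak' card_arc // -ltnS.
by rewrite cA => ->.
Qed.

Theorem lemma6 (n r : nat) (F : {set {set 'I_n}}) (p : {perm 'I_n}) :
  1 <= r -> r <= n ->
  (forall A, A \in F -> #|A| = r) ->
  (\sum_(A in F | is_interval p A) (mval r F A)^-1 <= r%:R)%R.
Proof.
move=> r1 rn Fr.
have n0 : 0 < n by lia.
rewrite -big_enum_cond /= -big_filter.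
set L := [seq A <- enum F | is_interval p A].
have HL : forall A, A \in L -> [/\ A \in F, st p A < n & A = arcset p r (st p A)].
  move=> A; rewrite mem_filter mem_enum => /andP[iA AF].
  by have [? ?] := st_spec iA (Fr A AF); split.
pose w (i : nat) := ((mval r F (arcset p r i))^-1)%R.
have -> : (\sum_(A <- L) (mval r F A)^-1 = \sum_(i <- map (st p) L) w i)%R.
  rewrite big_map; apply: eq_big_seq => A AL.
  by have [_ _ e] := HL A AL; rewrite /w -e.
apply: (@core n r) => //.
- have uL : uniq L by apply: filter_uniq; exact: enum_uniq.
  rewrite map_inj_in_uniq // => A B AL BL e.
  have [_ _ eA] := HL A AL; have [_ _ eB] := HL B BL.
  by rewrite eA eB e.
- by apply/allP => i /mapP[A AL ->]; have [] := HL A AL.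
move=> a M aS aM [uM sM dM].
have HM : forall j, j \in M -> j < n /\ arcset p r j \in F.
  move=> j /sM /mapP[B BL ->]; have [BF ? eB] := HL B BL; by rewrite -eB.
have disj : forall j j', j \in M -> j' \in M -> j != j' -> [disjoint arcset p r j & arcset p r j'].
  move=> j j' jM j'M ne; apply: dis_disj; [exact: (HM j jM).1 | exact: (HM j' j'M).1 | exact: dM].
have injM : {in M &, injective (arcset p r)}.
  move=> j j' jM j'M e; apply/eqP; apply: contraT => ne.
  have jn := (HM j jM).1.
  move/pred0P: (disj j j' jM j'M ne) => /(_ (p (Ordinal jn))) /=.
  by rewrite -e arc_self.
set Ms : {set {set 'I_n}} := [set B in map (arcset p r) M].
have cMs : #|Ms| = size M.
  have u : uniq (map (arcset p r) M) by rewrite map_inj_in_uniq.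
  move/card_uniqP: u; rewrite size_map => <-; exact: cardsE.
have mMs : matching_of F Ms.
  apply/andP; split.
    by apply/subsetP => B; rewrite inE => /mapP[j jM ->]; exact: (HM j jM).2.
  apply/trivIsetP => B C; rewrite !inE => /mapP[j jM ->] /mapP[j' j'M ->] ne.
  by apply: disj => //; apply: contra ne => /eqP ->.
have aMs : arcset p r a \in Ms by rewrite inE map_f.
have Mpos : 0 < size M by case: (M) aM.
have sMr : size M * r <= n.
  move: (mMs) => /andP[sF /eqP tr].
  have cn : #|cover Ms| <= n by rewrite -[X in _ <= X](card_ord n) max_card.
  rewrite -cMs; apply: leq_trans cn; rewrite -tr.
  rewrite (eq_bigr (fun _ => r)); last by move=> B BM; apply: Fr; apply: (subsetP sF).
  by rewrite sum_nat_const.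
rewrite /w /mval; case: ifP => [_|nex].
- rewrite invf_div /hh; case: eqP => // _.
  rewrite ler_pdivrMr ?ltr0n // mulrC -[X in (_ <= X)%R]/(n%:R / (size M)%:R)%R.
  rewrite ler_pdivlMr ?ltr0n // -natrM ler_nat mulnC //.
- have ne : size M != n %/ r.
    apply: contraFN nex => /eqP e; apply/existsP; exists Ms.
    by rewrite mMs aMs cMs e eqxx.
  rewrite /hh (negbTE ne) lef_pV2 ?posrE ?ltr0n //; last first.
    apply: (leq_trans Mpos); rewrite -cMs; apply: leq_bigmax_cond; by rewrite mMs aMs.
  have hle : size M <= \max_(M0 | matching_of F M0 && (arcset p r a \in M0)) #|M0|.
    rewrite -cMs; apply: leq_bigmax_cond; by rewrite mMs aMs.
  by rewrite ler_nat.
Qed.
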